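(* Let $u(n)$ be a sequence of nonnegative integers with $\lim_{n\to\infty}u(n)=\infty$, and for each $n$ let $A:\widehat{\mathbb{Z}}^{n+u(n)}\to\widehat{\mathbb{Z}}^n$ be a random $n\times(n+u(n))$ matrix whose entries are independent and each distributed according to the Haar probability measure on $\widehat{\mathbb{Z}}$. Then \[\lim_{n\to\infty}\mathbb{P}(A\text{ is surjective})=1.\]
   Context: $\widehat{\mathbb{Z}}=\prod_{p\text{ prime}}\mathbb{Z}_p$ is the profinite completion of $\mathbb{Z}$, with its Haar probability measure (the product of the Haar probability measures on the $p$-adic integers $\mathbb{Z}_p$). *)

(* Defs.v *)
From HB Require Import structures.
From mathcomp Require Import all_boot all_order all_algebra.
From mathcomp Require Import all_classical all_reals all_analysis.
Set Implicit Arguments. Unset Strict Implicit. Unset Printing Implicit Defensive.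
Import Order.TTheory GRing.Theory Num.Theory.
Local Open Scope classical_set_scope.
Local Open Scope ring_scope.

(* The profinite completion  Zhat = lim_{N >= 1} Z/NZ  (isomorphic to prod_p Z_p):
   an element is a compatible family (x_k)_k with x_k in Z/(k+1)Z, represented
   by its canonical residue in [0, k], such that x_k = x_l mod (k+1) whenever
   (k+1) | (l+1). *)
Record Zhat := MkZhat {
  zc : nat -> nat;
  zc_lt : forall k, (zc k < k.+1)%N;
  zc_compat : forall k l, (k.+1 %| l.+1)%N -> zc k = (zc l %% k.+1)%N }.

Lemma zhat0_lt k : (0 < k.+1)%N. Proof. by []. Qed.
Lemma zhat0_compat k l : (k.+1 %| l.+1)%N -> (0 = 0 %% k.+1)%N.
Proof. by rewrite mod0n. Qed.
Definition zhat0 : Zhat := MkZhat zhat0_lt zhat0_compat.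

HB.instance Definition _ := gen_eqMixin Zhat.
HB.instance Definition _ := gen_choiceMixin Zhat.
HB.instance Definition _ := isPointed.Build Zhat zhat0.

Definition ZMat (n m : nat) := 'I_n -> 'I_m -> Zhat.
HB.instance Definition _ n m := gen_eqMixin (ZMat n m).
HB.instance Definition _ n m := gen_choiceMixin (ZMat n m).
HB.instance Definition _ n m := isPointed.Build (ZMat n m) (fun _ _ => zhat0).

(* Cylinder sets: prescribe all entries modulo k+1. They generate the Borel
   sigma-algebra of the compact group Zhat^{n x m}. *)
Definition zcyl (n m : nat) : set (set (ZMat n m)) :=
  [set S | exists (k : nat) (B : 'I_n -> 'I_m -> nat),
           S = [set A | forall i j, zc (A i j) k = B i j]].

Definition ZMatSp (n m : nat) := g_sigma_algebraType (@zcyl n m).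

Definition entries_haar (R : realType) (n m : nat)
    (P : probability (ZMatSp n m) R) : Prop :=
  forall (i : 'I_n) (j : 'I_m) (k b : nat), (b < k.+1)%N ->
    P [set A : ZMatSp n m | zc (A i j) k = b] = ((k.+1)%:R^-1 : R)%:E.

Definition entries_indep (R : realType) (n m : nat)
    (P : probability (ZMatSp n m) R) : Prop :=
  forall (k : nat) (B : 'I_n -> 'I_m -> nat),
    P [set A : ZMatSp n m | forall i j, zc (A i j) k = B i j] =
    (\prod_(i < n) \prod_(j < m) fine (P [set A : ZMatSp n m | zc (A i j) k = B i j]))%:E.

(* Level-k component of the i-th coordinate of A x in Zhat (ring operations of
   the inverse limit are computed componentwise). *)
Definition zmatvec_level (n m : nat) (A : ZMat n m) (x : 'I_m -> Zhat)
    (i : 'I_n) (k : nat) : nat :=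
  ((\sum_(j < m) zc (A i j) k * zc (x j) k) %% k.+1)%N.

Definition zsurjective (n m : nat) (A : ZMat n m) : Prop :=
  forall y : 'I_n -> Zhat, exists x : 'I_m -> Zhat,
    forall (i : 'I_n) (k : nat), zmatvec_level A x i k = zc (y i) k.

(* Main.v *)
Require Import Defs.
From HB Require Import structures.
From mathcomp Require Import all_boot all_order all_algebra all_field.
From mathcomp Require Import all_classical all_reals all_analysis.
From mathcomp Require Import ring lra zify.
Import Order.TTheory GRing.Theory Num.Theory.
Set Implicit Arguments. Unset Strict Implicit. Unset Printing Implicit Defensive.

Definition solv n m (a : 'I_n -> 'I_m -> nat) (N : nat) :=
  forall y : 'I_n -> nat, exists x : 'I_m -> nat,
    forall i, (\sum_j a i j * x j = y i %[mod N])%N.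

Lemma sum_congr_mod I (r : seq I) (f g : I -> nat) d :
  (forall i, f i = g i %[mod d])%N -> (\sum_(i <- r) f i = \sum_(i <- r) g i %[mod d])%N.
Proof.
move=> H; rewrite -(modn_summ r predT f) -(modn_summ r predT g).
by congr (_ %% _); apply: eq_bigr => i _; apply: H.
Qed.

Lemma solv_congr n m (a a' : 'I_n -> 'I_m -> nat) N :
  (forall i j, a i j = a' i j %[mod N])%N -> solv a N -> solv a' N.
Proof.
move=> H S y; have [x Hx] := S y; exists x => i.
rewrite -Hx; apply: sum_congr_mod => j.
by rewrite -modnMml -H modnMml.
Qed.

Lemma solv_step n m (a : 'I_n -> 'I_m -> nat) (M b : nat) (y : 'I_n -> nat)
  (x : 'I_m -> nat) : (0 < M)%N -> (0 < b)%N -> solv a b ->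
  (forall i, \sum_j a i j * x j = y i %[mod M])%N ->
  exists x', (forall i, \sum_j a i j * x' j = y i %[mod M * b])%N /\
             (forall j, x' j = x j %[mod M])%N.
Proof.
move=> M0 b0 S Hx.
pose s i := (\sum_j a i j * x j)%N.
pose r i := (y i + (M * b - 1) * s i)%N.
have rdiv i : (M %| r i)%N.
  have h1 : (r i + s i = y i + M * b * s i)%N.
    rewrite /r -addnA; congr (_ + _).
    rewrite mulnBl mul1n subnK //.
    by rewrite -{1}(mul1n (s i)) leq_mul2r muln_gt0 M0 b0 orbT.
  have h2 : (r i + s i == 0 + s i %[mod M])%N.
    rewrite h1 add0n -mulnA mulnC addnC modnMDl; apply/eqP.
    by rewrite (Hx i).
  by rewrite eqn_modDr mod0n in h2.
have [z Hz] := S (fun i => r i %/ M)%N.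
exists (fun j => x j + M * z j)%N; split; last first.
  by move=> j; rewrite [M * _]mulnC addnC modnMDl.
move=> i.
have -> : (\sum_j a i j * (x j + M * z j) = s i + M * \sum_j a i j * z j)%N.
  rewrite /s big_distrr -big_split /=; apply: eq_bigr => j _.
  by rewrite mulnDr mulnCA.
have e1 : (M * \sum_j a i j * z j = r i %[mod M * b])%N.
  rewrite -muln_modr Hz muln_modr mulnC divnK //.
have e2 : (r i + s i = y i + M * b * s i)%N.
  rewrite /r -addnA; congr (_ + _).
  rewrite mulnBl mul1n subnK //.
  by rewrite -{1}(mul1n (s i)) leq_mul2r muln_gt0 M0 b0 orbT.
by rewrite -modnDmr e1 modnDmr addnC e2 -modnDmr mulnC modnMl addn0.
Qed.

Lemma solv_mul n m (a : 'I_n -> 'I_m -> nat) M b :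
  (0 < M)%N -> (0 < b)%N -> solv a M -> solv a b -> solv a (M * b).
Proof.
move=> M0 b0 SM Sb y; have [x Hx] := SM y.
by have [x' [H1 _]] := solv_step M0 b0 Sb Hx; exists x'.
Qed.

Lemma solv1 n m (a : 'I_n -> 'I_m -> nat) : solv a 1.
Proof. by move=> y; exists (fun _ => 0%N) => i; rewrite !modn1. Qed.

Local Open Scope ring_scope.
Definition Fmat p n m (a : 'I_n -> 'I_m -> nat) : 'M['F_p]_(n, m) :=
  \matrix_(i, j) ((a i j)%:R)%R.

Lemma solv_prime p n m (a : 'I_n -> 'I_m -> nat) :
  prime p -> row_free (Fmat p a) -> solv a p.
Proof.
move=> pp /row_freeP [B HB] y.
pose yv : 'cV['F_p]_n := \col_i ((y i)%:R)%R.
pose xv := (B *m yv)%R.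
exists (fun j => nat_of_ord (xv j ord0)) => i.
rewrite -(val_Fp_nat pp) -(val_Fp_nat pp (y i)); congr nat_of_ord.
have : ((Fmat p a *m B) *m yv)%R i ord0 = yv i ord0 by rewrite HB mul1mx.
rewrite -mulmxA !mxE => <-.
rewrite natr_sum; apply: eq_bigr => j _.
by rewrite natrM !mxE natr_Zp.
Qed.

Definition levnat n m (A : ZMat n m) k : 'I_n -> 'I_m -> nat :=
  fun i j => zc (A i j) k.

Lemma zc_mod (x : Zhat) k l : (k.+1 %| l.+1)%N -> (zc x k = zc x l %[mod k.+1])%N.
Proof. by move=> H; rewrite (zc_compat x H) modn_mod. Qed.

Lemma levnat_congr n m (A : ZMat n m) M N : (0 < M)%N -> (0 < N)%N -> (M %| N)%N ->
  solv (levnat A M.-1) M -> solv (levnat A N.-1) M.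
Proof.
move=> M0 N0 MN; apply: solv_congr => i j.
rewrite /levnat -{2 3}(prednK M0); apply: zc_mod.
by rewrite !prednK.
Qed.

Lemma solv_primes n m (A : ZMat n m) :
  (forall p, prime p -> solv (levnat A p.-1) p) ->
  forall N, (0 < N)%N -> solv (levnat A N.-1) N.
Proof.
move=> HP N; elim/ltn_ind: N => N IH N0.
have [N1|N1] := leqP N 1.
  have -> : N = 1%N by apply/eqP; rewrite eqn_leq N1 N0.
  exact: solv1.
have pp := pdiv_prime N1.
have pN := pdiv_dvd N.
set p := pdiv N in pp pN *.
have p1 : (1 < p)%N by apply: prime_gt1.
have p0 : (0 < p)%N by apply: ltnW.
have eN : N = (N %/ p * p)%N by rewrite divnK.
have N'0 : (0 < N %/ p)%N by rewrite divn_gt0 // pdiv_leq.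
have N'N : (N %/ p < N)%N by rewrite ltn_Pdiv.
rewrite [X in solv _ X]eN; apply: solv_mul => //.
  apply: levnat_congr => //; last exact: IH.
  by apply: dvdn_div.
apply: levnat_congr => //; exact: HP.
Qed.

Lemma zconst_lt (c : nat) k : (c %% k.+1 < k.+1)%N.
Proof. by rewrite ltn_pmod. Qed.
Lemma zconst_compat (c : nat) k l : (k.+1 %| l.+1)%N ->
  (c %% k.+1 = (c %% l.+1) %% k.+1)%N.
Proof. by move=> H; rewrite modn_dvdm. Qed.
Definition zconst (c : nat) : Zhat := MkZhat (zconst_lt c) (zconst_compat c).

Lemma surj_solv n m (A : ZMat n m) : zsurjective A -> forall N, solv (levnat A N) N.+1.
Proof.
move=> HS N y; have [X HX] := HS (fun i => zconst (y i)).
exists (fun j => zc (X j) N) => i.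
by have := HX i N; rewrite /zmatvec_level /=.
Qed.

Lemma solv_surj n m (A : ZMat n m) : (forall N, solv (levnat A N) N.+1) -> zsurjective A.
Proof.
move=> HS y.
pose sol j (x : 'I_m -> nat) := forall i,
  (\sum_j' zc (A i j') (j`!).-1 * x j' = zc (y i) (j`!).-1 %[mod j`!])%N.
have step : forall j x, sol j x -> exists x', sol j.+1 x' /\
     forall j', (x' j' = x j' %[mod j`!])%N.
  move=> j x Hx.
  have M0 : (0 < j`!)%N := fact_gt0 j.
  have dM : (j`! %| (j.+1)`!)%N by rewrite factS dvdn_mull.
  have e : ((j.+1)`! = j`! * j.+1)%N by rewrite factS mulnC.
  have Sb : solv (levnat A ((j.+1)`!).-1) j.+1.
    apply: solv_congr (HS j) => i j'; rewrite /levnat; apply: zc_mod.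
    by rewrite prednK ?fact_gt0 //; apply: dvdn_fact; rewrite ltn0Sn leqnn.
  have Hx' : forall i, (\sum_j' levnat A ((j.+1)`!).-1 i j' * x j'
          = zc (y i) ((j.+1)`!).-1 %[mod j`!])%N.
    move=> i.
    have h1 : (zc (y i) (j`!).-1 = zc (y i) ((j.+1)`!).-1 %[mod (j`!).-1.+1])%N.
      by apply: zc_mod; rewrite !prednK ?fact_gt0.
    rewrite prednK // in h1; rewrite -h1 -Hx.
    apply: sum_congr_mod => j'.
    have h2 : (zc (A i j') (j`!).-1 = zc (A i j') ((j.+1)`!).-1 %[mod (j`!).-1.+1])%N.
      by apply: zc_mod; rewrite !prednK ?fact_gt0.
    rewrite prednK // in h2.
    by rewrite /levnat -modnMml -h2 modnMml.
  have [x' [H1 H2]] := solv_step M0 (ltn0Sn j) Sb Hx'.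
  by exists x'; split => // i; have := H1 i; rewrite -e.
have Hex : forall t : nat * ('I_m -> nat), exists x', sol t.1 t.2 ->
   sol t.1.+1 x' /\ forall j', (x' j' = t.2 j' %[mod t.1`!])%N.
  move=> [j x] /=; have [Hs|Hs] := pselect (sol j x).
    by have [x' Hx'] := step j x Hs; exists x'.
  by exists x.
have [f Hf] := choice Hex.
pose xs := fix xs j := if j is j'.+1 then f (j', xs j') else (fun _ : 'I_m => 0%N).
have solxs : forall j, sol j (xs j).
  elim => [|j IH]; first by move=> i; rewrite fact0 !modn1.
  exact: (Hf (j, xs j) IH).1.
have xsmod : forall k j, (k.+1 <= j)%N -> forall j',
    (xs j j' = xs k.+1 j' %[mod k.+1])%N.
  move=> k; elim => [//|j IH] Hkj j'.
  rewrite leq_eqVlt in Hkj; case/orP: Hkj => [/eqP->//|Hkj].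
  rewrite ltnS in Hkj.
  rewrite -(IH Hkj j').
  have h : (xs j.+1 j' = xs j j' %[mod j`!])%N := (Hf (j, xs j) (solxs j)).2 j'.
  have dk : (k.+1 %| j`!)%N by apply: dvdn_fact; rewrite ltn0Sn Hkj.
  by rewrite -(modn_dvdm (xs j.+1 j') dk) h modn_dvdm.
have ltp : forall j' l, (xs l.+1 j' %% l.+1 < l.+1)%N by move=> *; rewrite ltn_pmod.
have cmp : forall j' k l, (k.+1 %| l.+1)%N ->
    (xs k.+1 j' %% k.+1 = (xs l.+1 j' %% l.+1) %% k.+1)%N.
  move=> j' k l H; rewrite modn_dvdm //; symmetry; apply: xsmod.
  exact: dvdn_leq H.
exists (fun j' => MkZhat (ltp j') (cmp j')) => i k.
rewrite /zmatvec_level /=.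
have HL : (k.+1 %| ((k.+1)`!).-1.+1)%N by rewrite prednK ?fact_gt0 //; apply: dvdn_fact; rewrite ltn0Sn leqnn.
transitivity ((\sum_j zc (A i j) ((k.+1)`!).-1 * xs k.+1 j) %% k.+1)%N.
  apply: sum_congr_mod => j.
  by rewrite modnMmr -modnMml (zc_mod _ HL) modnMml.
have dk : (k.+1 %| (k.+1)`!)%N by apply: dvdn_fact; rewrite ltn0Sn leqnn.
rewrite -(modn_dvdm _ dk) solxs modn_dvdm //.
by rewrite -(zc_mod _ HL) modn_small // zc_lt.
Qed.

Lemma count_ker p n m (v : 'rV['F_p]_n) : prime p -> v != 0 ->
  (#|[set D : 'M['F_p]_(n, m) | v *m D == 0%R]| * p ^ m <= p ^ (n * m))%N.
Proof.
move=> pp v0.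
have [i0 Hi0] : exists i0, v 0 i0 != 0.
  apply/existsP; apply: contraR v0 => /existsPn H; apply/eqP/matrixP => i j.
  by rewrite ord1 mxE; apply/eqP; move: (H j); rewrite negbK.
have n0 : (0 < n)%N by apply: leq_ltn_trans (leq0n i0) (ltn_ord i0).
pose f (D : 'M['F_p]_(n, m)) := [ffun x : 'I_n.-1 * 'I_m => D (lift i0 x.1) x.2].
have : (#|[set D : 'M['F_p]_(n, m) | v *m D == 0%R]| <= #|{ffun 'I_n.-1 * 'I_m -> 'F_p}|)%N.
  apply: (@leq_card_in _ _ f) => D D'; rewrite !inE => /eqP HD /eqP HD' /ffunP Heq.
  have Hoff : forall i, i != i0 -> D i =1 D' i.
    move=> i Hi j; case: (unliftP i0 i) => [k ->|E]; last by rewrite E eqxx in Hi.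
    by have := Heq (k, j); rewrite !ffunE.
  apply/matrixP => i j; case: (unliftP i0 i) => [k ->|->]; first by apply: Hoff; rewrite eq_sym neq_lift.
  have e : forall E : 'M['F_p]_(n, m), (v *m E) 0 j =
      v 0 i0 * E i0 j + \sum_(i | i != i0) v 0 i * E i j.
    by move=> E; rewrite mxE (bigD1 i0).
  have := e D; have := e D'; rewrite HD HD' !mxE.
  have Hs : \sum_(i | i != i0) v 0 i * D i j = \sum_(i | i != i0) v 0 i * D' i j.
    by apply: eq_bigr => i1 Hi; rewrite (Hoff i1 Hi).
  rewrite Hs.
  move=> h1 h2; apply: (mulfI Hi0); apply: (addIr (\sum_(i | i != i0) v 0 i * D' i j)).
  by rewrite -h1 -h2.
have cF : #|{ffun 'I_n.-1 * 'I_m -> 'F_p}| = (p ^ (n.-1 * m))%N.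
  by rewrite card_ffun card_Fp // card_prod !card_ord.
rewrite cF => H.
have e : (n * m = m + n.-1 * m)%N by rewrite -{1}(prednK n0) mulSn.
by rewrite e expnD mulnC leq_mul2l H orbT.
Qed.

Lemma nonfree_vec (F : fieldType) n m (D : 'M[F]_(n, m)) : ~~ row_free D ->
  exists v : 'rV[F]_n, v != 0 /\ v *m D = 0.
Proof.
rewrite -kermx_eq0 => /eqP K.
have [i Hi] : exists i, row i (kermx D) != 0.
  apply/existsP; apply: contra_notT K => /existsPn H; apply/matrixP => i j.
  by move: (H i); rewrite negbK => /eqP /rowP /(_ j); rewrite !mxE.
by exists (row i (kermx D)); split => //; apply/sub_kermxP; apply: row_sub.
Qed.

Lemma count_nonfree p n m : prime p ->
  (#|[set D : 'M['F_p]_(n, m) | ~~ row_free D]| * p ^ m <= p ^ n * p ^ (n * m))%N.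
Proof.
move=> pp.
have H1 : (#|[set D : 'M['F_p]_(n, m) | ~~ row_free D]| <=
   \sum_(v : 'rV['F_p]_n | v != 0%R) #|[set D : 'M['F_p]_(n, m) | v *m D == 0%R]|)%N.
  rewrite -sum1dep_card.
  apply: (@leq_trans (\sum_(D : 'M['F_p]_(n, m) | ~~ row_free D)
        \sum_(v : 'rV['F_p]_n | v != 0%R) nat_of_bool (v *m D == 0%R))).
    apply: leq_sum => D HD; have [v [v0 vD]] := nonfree_vec HD.
    by rewrite (bigD1 v) //= vD eqxx.
  apply: (@leq_trans (\sum_(D : 'M['F_p]_(n, m))
        \sum_(v : 'rV['F_p]_n | v != 0%R) nat_of_bool (v *m D == 0%R))).
    by rewrite [X in (_ <= X)%N](bigID (fun D => ~~ row_free D)) /= leq_addr.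
  rewrite exchange_big /=; apply: leq_sum => v _.
  rewrite -sum1dep_card [X in (_ <= X)%N]big_mkcond /=; apply: leq_sum => D _; by case: (_ == _).
apply: (leq_trans (leq_mul H1 (leqnn (p ^ m)))).
rewrite big_distrl /=.
apply: (@leq_trans (\sum_(v : 'rV['F_p]_n | v != 0%R) p ^ (n * m))%N).
  by apply: leq_sum => v v0; exact: count_ker.
apply: (@leq_trans (\sum_(v : 'rV['F_p]_n) p ^ (n * m))%N).
  by rewrite [X in (_ <= X)%N](bigID (fun v => v != 0%R)) /= leq_addr.
by rewrite sum_nat_const card_mx card_Fp // mul1n.
Qed.

Lemma card_Fmat k n m : prime k.+2 ->
  (#|[pred C : 'M['I_k.+2]_(n, m) | ~~ row_free (Fmat k.+2 (fun i j => nat_of_ord (C i j)))]|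
     * k.+2 ^ m <= k.+2 ^ n * k.+2 ^ (n * m))%N.
Proof.
move=> pk.
pose f := fun C : 'M['I_k.+2]_(n, m) => Fmat k.+2 (fun i j => nat_of_ord (C i j)).
have inj : injective f.
  move=> C C' E; apply/matrixP => i j; apply: val_inj.
  have := congr1 (fun M : 'M['F_k.+2]_(n, m) => nat_of_ord (M i j)) E.
  by rewrite /= !mxE !(val_Fp_nat pk) !modn_small.
apply: leq_trans (count_nonfree n m pk); rewrite leq_mul2r; apply/orP; right.
rewrite -(card_in_imset (f := f) (D := [pred C : 'M['I_k.+2]_(n, m) | ~~ row_free (f C)]));
  last by move=> x y _ _; apply: inj.
apply: subset_leq_card; apply/fintype.subsetP => D /imsetP [C HC ->].
by rewrite inE; move: HC; rewrite inE.
Qed.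

Lemma natbound k t : (2 ^ t.+2 * (k.+1 * k.+2) <= 4 * k.+2 ^ t.+2)%N.
Proof.
elim: t => [|t IH].
  rewrite !expnS !expn0; nia.
rewrite (expnS 2 t.+2) (expnS k.+2 t.+2); nia.
Qed.

Lemma pw_bound (R : realType) u k : (2 <= u)%N ->
  (((k.+2)%:R : R)^-1) ^+ u <= 4 / 2 ^+ u * ((k.+1)%:R^-1 - (k.+2)%:R^-1).
Proof.
move=> u2.
have hE : ((k.+1)%:R : R)^-1 - (k.+2)%:R^-1 = ((k.+1 * k.+2)%:R)^-1.
  have k0 : (0:R) <= k%:R := ler0n _ _.
  rewrite natrM; field.
  by rewrite (gt_eqF (_ : 0 < 2 + k%:R)) ?(gt_eqF (_ : 0 < 1 + k%:R)) //; lra.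
rewrite hE exprVn -[u](subnK u2) addn2.
have hk : (0 : R) < (k.+2)%:R ^+ (u - 2).+2 by rewrite exprn_gt0 // ltr0n.
have hN : (0 : R) < (k.+1 * k.+2)%:R by rewrite ltr0n.
have h2 : (0 : R) < 2 ^+ (u - 2).+2 by rewrite exprn_gt0.
rewrite -mulrA -invfM ler_pdivlMr; last by rewrite mulr_gt0.
rewrite mulrC ler_pdivrMr //.
have e2 : ((2 ^ (u-2).+2)%:R : R) = 2 ^+ (u-2).+2 by rewrite natrX.
by rewrite -e2 -natrX -!natrM ler_nat; exact: natbound.
Qed.

Lemma series_bound (R : realType) u : (2 <= u)%N ->
  (\sum_(0 <= k <oo) ((((k.+2)%:R : R)^-1) ^+ u)%:E <= (4 / 2 ^+ u)%:E)%E.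
Proof.
move=> u2.
pose c : R := 4 / 2 ^+ u.
have c0 : 0 <= c by rewrite divr_ge0 // exprn_ge0.
have d0 : forall k : nat, (0 : R) <= (k.+1)%:R^-1 - (k.+2)%:R^-1.
  by move=> k; rewrite subr_ge0 lef_pV2 ?ler_nat ?posrE ?ltr0n.
apply: (@le_trans _ _ (\sum_(0 <= k <oo) (c * ((k.+1)%:R^-1 - (k.+2)%:R^-1))%:E)%E).
  apply: lee_nneseries => [k _ _|k _]; first by rewrite lee_fin exprn_ge0 // invr_ge0.
  by rewrite lee_fin; exact: pw_bound.
apply: lime_le.
  by apply: is_cvg_nneseries => k _ _; rewrite lee_fin mulr_ge0.
near=> K; rewrite sumEFin lee_fin -mulr_sumr.
have -> : \sum_(0 <= k < K) ((k.+1)%:R^-1 - (k.+2)%:R^-1) =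
          \sum_(0 <= k < K) ((- (k.+1).+1%:R^-1) - (- (k.+1)%:R^-1)) :> R.
  by apply: eq_bigr => k _; rewrite opprK addrC.
rewrite telescope_sumr // opprK.
rewrite ler_piMr // invr1.
have h : (0 : R) <= (K.+1%:R)^-1 by rewrite invr_ge0.
by rewrite gerDr oppr_le0.
Unshelve. all: end_near.
Qed.

Local Open Scope classical_set_scope.

Definition lev n m (A : ZMat n m) k : 'M['I_k.+1]_(n, m) :=
  \matrix_(i, j) Ordinal (zc_lt (A i j) k).

Definition cylS n m k (C : 'M['I_k.+1]_(n, m)) : set (ZMatSp n m) :=
  [set A | forall i j, zc (A i j) k = C i j].

Lemma lev_cyl n m (A : ZMat n m) k C : lev A k = C <-> (forall i j, zc (A i j) k = C i j).
Proof.
split; first by move=> <- i j; rewrite mxE.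
by move=> H; apply/matrixP => i j; apply: val_inj; rewrite mxE /= H.
Qed.

Lemma cylS_meas n m k (C : 'M['I_k.+1]_(n, m)) : measurable (cylS C).
Proof. by apply: sub_sigma_algebra; exists k, (fun i j => nat_of_ord (C i j)). Qed.

Lemma levsetE n m k (Q : pred 'M['I_k.+1]_(n, m)) :
  [set A : ZMatSp n m | Q (lev A k)] =
  \big[setU/set0]_(i < #|{: 'M['I_k.+1]_(n, m)}| | Q (enum_val i)) cylS (enum_val i).
Proof.
apply/seteqP; split => A /=.
  move=> HQ; pose i0 := enum_rank (lev A k).
  rewrite (bigD1 i0) /=; last by rewrite /i0 enum_rankK.
  by left; apply/lev_cyl; rewrite /i0 enum_rankK.
elim/big_rec: _ => [//|i U Hi IH [H|H]]; last exact: IH.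
by move/lev_cyl: H => ->.
Qed.

Lemma levset_meas n m k (Q : pred 'M['I_k.+1]_(n, m)) :
  measurable [set A : ZMatSp n m | Q (lev A k)].
Proof. by rewrite levsetE; apply: bigsetU_measurable => i _; exact: cylS_meas. Qed.

Section Prob.
Variables (R : realType) (n m : nat) (P : probability (ZMatSp n m) R).
Hypotheses (hhaar : entries_haar P) (hind : entries_indep P).

Lemma P_cyl k (C : 'M['I_k.+1]_(n, m)) :
  P (cylS C) = ((((k.+1)%:R : R)^-1) ^+ (n * m))%:E.
Proof.
rewrite /cylS (hind k (fun i j => nat_of_ord (C i j))).
congr EFin.
rewrite (eq_bigr (fun _ => ((k.+1)%:R : R)^-1 ^+ m)); last first.
  move=> i _; rewrite (eq_bigr (fun _ => ((k.+1)%:R : R)^-1)); last first.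
    by move=> j _; rewrite hhaar.
  by rewrite prodr_const card_ord.
by rewrite prodr_const card_ord -exprM mulnC.
Qed.

Lemma P_levset k (Q : pred 'M['I_k.+1]_(n, m)) :
  P [set A : ZMatSp n m | Q (lev A k)] =
  ((#|Q|)%:R * (((k.+1)%:R : R)^-1) ^+ (n * m))%:E.
Proof.
rewrite levsetE measure_bigsetU_ord_cond; last first.
- move=> i j /= Hi Hj [A [/lev_cyl Ai /lev_cyl Aj]].
  by apply: enum_val_inj; rewrite -Ai -Aj.
- by move=> i _; exact: cylS_meas.
rewrite (eq_bigr (fun _ => ((((k.+1)%:R : R)^-1) ^+ (n * m))%:E)); last first.
  by move=> i _; exact: P_cyl.
rewrite -(@big_enum_val_cond _ _ _ _ predT Q (fun _ => ((((k.+1)%:R : R)^-1) ^+ (n * m))%:E)).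
rewrite sumEFin; congr EFin; rewrite sumr_const [RHS]mulrC mulr_natr; congr (_ *+ _).
Qed.


Definition GQ k : pred 'M['I_k.+2]_(n, m) :=
  fun C => prime k.+2 && ~~ row_free (Fmat k.+2 (fun i j => nat_of_ord (C i j))).
Arguments GQ : clear implicits.
Definition Gset k : set (ZMatSp n m) := [set A | GQ k (lev A k.+1)].

Lemma P_G u k : m = (n + u)%N -> (P (Gset k) <= ((((k.+2)%:R : R)^-1) ^+ u)%:E)%E.
Proof.
move=> hm; rewrite /Gset P_levset lee_fin.
case pk : (prime k.+2); last first.
  have -> : #|GQ k| = 0%N by apply: eq_card0 => C; rewrite unfold_in /GQ pk.
  by rewrite mul0r exprn_ge0 // invr_ge0.
have hc := card_Fmat n m pk.
have ec : #|GQ k| = #|[pred C : 'M['I_k.+2]_(n, m) |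
    ~~ row_free (Fmat k.+2 (fun i j => nat_of_ord (C i j)))]|.
  by apply: eq_card => C; rewrite !unfold_in /GQ pk.
have hc' : (#|GQ k| * k.+2 ^ u <= k.+2 ^ (n * m))%N.
  rewrite ec -(@leq_pmul2l (k.+2 ^ n)) ?expn_gt0 //.
  by rewrite mulnCA -expnD -hm.
rewrite !exprVn ler_pdivrMr ?exprn_gt0 ?ltr0n //.
rewrite mulrC ler_pdivlMr ?exprn_gt0 ?ltr0n //.
by rewrite -!natrX -natrM ler_nat.
Qed.

Lemma levnatE (A : ZMat n m) k : (fun i j => nat_of_ord (lev A k i j)) = levnat A k.
Proof. by apply: funext => i; apply: funext => j; rewrite mxE. Qed.

Lemma S_meas : measurable [set A : ZMatSp n m | zsurjective A].
Proof.
have -> : [set A : ZMatSp n m | zsurjective A] = \bigcap_(N in [set: nat])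
    [set A : ZMatSp n m | `[< solv (fun i j => nat_of_ord (lev A N i j)) N.+1 >]].
  apply/seteqP; split => A /=.
    by move=> HS N _; apply/asboolP; rewrite levnatE; exact: surj_solv.
  by move=> H; apply: solv_surj => N; have := H N I; move/asboolP; rewrite levnatE.
apply: bigcap_measurable; first by exists 0%N.
move=> N _.
exact: (@levset_meas n m N (fun C => `[< solv (fun i j => nat_of_ord (C i j)) N.+1 >])).
Qed.

Lemma S_compl : ~` [set A : ZMatSp n m | zsurjective A] `<=` \bigcup_k Gset k.
Proof.
move=> A nS; have [[k _ Hk]|nG] := pselect (exists2 k, setT k & Gset k A).
  by exists k.
exfalso; apply: nS; apply: solv_surj => N.
have HP : forall p, prime p -> solv (levnat A p.-1) p.
  move=> p pp; have p2 : (2 <= p)%N := prime_gt1 pp.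
  have [k ek] : exists k, p = k.+2 by exists (p - 2)%N; rewrite -addn2 subnK.
  subst p; apply: (solv_prime pp).
  apply/negPn/negP => nrf; apply: nG; exists k => //.
  by rewrite /Gset /= /GQ pp levnatE.
exact: (solv_primes HP (ltn0Sn N)).
Qed.

Lemma key u : m = (n + u)%N -> (2 <= u)%N ->
  ((1 - 4 / 2 ^+ u)%:E <= P [set A : ZMatSp n m | zsurjective A])%E.
Proof.
move=> hm u2.
have Sm := S_meas.
have GM : forall k, measurable (Gset k) by move=> k; exact: levset_meas.
have UM : measurable (\bigcup_k Gset k) by apply: bigcup_measurable => k _.
have h1 : (P (~` [set A : ZMatSp n m | zsurjective A]) <= P (\bigcup_k Gset k))%E.
  apply: le_measure; rewrite ?inE //; last exact: S_compl.
  exact: measurableC.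
have h2 := generalized_Boole_inequality P GM UM.
have h3 : (\sum_(0 <= k <oo) P (Gset k) <= \sum_(0 <= k <oo) ((((k.+2)%:R : R)^-1) ^+ u)%:E)%E.
  by apply: lee_nneseries => k _; last exact: P_G.
have h4 := series_bound R u2.
rewrite -[X in P X]setCK probability_setC; last exact: measurableC.
rewrite EFinB; apply: leeB => //.
exact: le_trans h1 (le_trans h2 (le_trans h3 h4)).
Qed.
End Prob.

Theorem corollary7 (R : realType) (u : nat -> nat)
  (hu : forall M : nat, exists N : nat, forall n : nat, (N <= n)%N -> (M <= u n)%N)
  (P : forall n : nat, probability (ZMatSp n (n + u n)) R)
  (hhaar : forall n : nat, entries_haar (P n))
  (hind : forall n : nat, entries_indep (P n)) :
  (fun n => P n [set A : ZMatSp n (n + u n) | zsurjective A]) @ \oo --> 1%E.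
Proof.
have [N0 HN0] := hu 2%N.
apply: (@squeeze_cvge _ _ _ R (fun n => (1 - 4 / 2 ^+ u n)%:E) _ (fun _ => 1%E)).
- near=> n; apply/andP; split.
    apply: key => //; apply: HN0; near: n; exact: nbhs_infty_ge.
  by apply: probability_le1; exact: S_meas.
- apply: cvg_EFin; first by near=> n.
  apply/cvgrPdist_le => e e0.
  have [M HM] : exists M : nat, 4 / e < M%:R.
    by exists (Num.Def.archi_bound (4 / e)); apply: archi_boundP; rewrite divr_ge0 // ltW.
  have [N1 HN1] := hu M.
  near=> n.
  have hu' : (M <= u n)%N by apply: HN1; near: n; exact: nbhs_infty_ge.
  have h2 : 4 / e < 2 ^+ u n.
    apply: (lt_le_trans HM); rewrite -natrX ler_nat.
    exact: leq_trans hu' (ltnW (ltn_expl _ _)).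
  rewrite ltr_pdivrMr // in h2.
  rewrite /= opprB addrC subrK ger0_norm ?divr_ge0 ?exprn_ge0 //.
  by rewrite ler_pdivrMr ?exprn_gt0 // mulrC ltW.
- exact: cvg_cst.
Unshelve. all: end_near.
Qed.
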